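(* Let $k>0$ be real, let $M=\begin{bmatrix} k-1 & k-1 & k\\ 1&0&0\\ 0&1&0\end{bmatrix}$ and $$N_0=\begin{bmatrix} k-1 & 2k & 2k\\ 2 & 1-k & 2\\ \frac{2}{k} & \frac{2}{k} & -\frac{1}{k}(k^2+k-2)\end{bmatrix}.$$ For every integer $n\ge 1$, $$N_0M^{n}=\begin{bmatrix} j_{n+1} & t_{n-1} & kj_{n}\\ j_{n} & t_{n-2} & kj_{n-1}\\ j_{n-1} & t_{n-3} & kj_{n-2}\end{bmatrix},$$ where $t_{m}=(k-1)j_{m+1}+kj_{m}$ for every integer $m$.
   Context: For real $k>0$, the third-order $k$-Jacobsthal--Lucas sequence $(j_n)=(j_n^{(3)}(k))$ is defined by $j_0=2$, $j_1=k-1$, $j_2=k^2+1$ and $j_{n+3}=(k-1)j_{n+2}+(k-1)j_{n+1}+kj_n$. It is extended to all negative indices by running this recurrence backwards, i.e. $j_{m}=\frac{1}{k}\left(j_{m+3}-(k-1)j_{m+2}-(k-1)j_{m+1}\right)$. *)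

(* Defs.v *)
From HB Require Import structures.
From mathcomp Require Import all_boot all_order all_algebra.
From mathcomp Require Import reals.
Set Implicit Arguments. Unset Strict Implicit. Unset Printing Implicit Defensive.
Import Order.TTheory GRing.Theory Num.Theory.
Local Open Scope ring_scope.

Section JL.
Variable R : realType.
Variable k : R.

(* forward state: (j_n, j_{n+1}, j_{n+2}) *)
Fixpoint jfwd (n : nat) : R * R * R :=
  match n with
  | O => (2, k - 1, k ^+ 2 + 1)
  | S m => let: (a, b, c) := jfwd m in
           (b, c, (k - 1) * c + (k - 1) * b + k * a)
  end.

(* backward state: (j_{-n}, j_{-n+1}, j_{-n+2}) *)
Fixpoint jbwd (n : nat) : R * R * R :=
  match n with
  | O => (2, k - 1, k ^+ 2 + 1)
  | S m => let: (a, b, c) := jbwd m in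
           ((c - (k - 1) * b - (k - 1) * a) / k, a, b)
  end.

Definition jl (m : int) : R :=
  match m with
  | Posz n => (jfwd n).1.1
  | Negz n => (jbwd n.+1).1.1
  end.

Definition tl (m : int) : R := (k - 1) * jl (m + 1) + k * jl m.
End JL.

Definition mx3 (R : Type) (a b c d e f g h i : R) : 'M[R]_3 :=
  \matrix_(r < 3, s < 3)
    nth a (nth [:: a; b; c] [:: [:: a; b; c]; [:: d; e; f]; [:: g; h; i]] r) s.

Definition Mk (R : realType) (k : R) : 'M[R]_3 :=
  mx3 (k - 1) (k - 1) k
      1 0 0
      0 1 0.

Definition N0k (R : realType) (k : R) : 'M[R]_3 :=
  mx3 (k - 1) (2 * k) (2 * k)
      2 (1 - k) 2
      (2 / k) (2 / k) (- (k ^+ 2 + k - 2) / k).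

(* Main.v *)
Require Import Defs.
From mathcomp Require Import all_boot all_order all_algebra reals.
From mathcomp Require Import ring lra zify.
Import GRing.Theory Num.Theory.
Local Open Scope ring_scope.

Section S.
Variable R : realType.
Variable k : R.
Hypothesis hk : 0 < k.

Lemma fwd_rec n : (jfwd k n.+3).1.1 = (k-1) * (jfwd k n.+2).1.1 + (k-1) * (jfwd k n.+1).1.1 + k * (jfwd k n).1.1.
Proof. by rewrite /=; case: (jfwd k n) => [[a b] c]. Qed.

Lemma bwd_all p : [/\ jl k (- p%:Z) = (jbwd k p).1.1,
  jl k (- p%:Z + 1) = (jbwd k p).1.2 & jl k (- p%:Z + 2) = (jbwd k p).2].
Proof.
elim: p => [|p [h1 h2 h3]]; first by split.
rewrite /=; move: h1 h2 h3; case: (jbwd k p) => [[a b] c] /= h1 h2 h3.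
split.
- by [].
- rewrite -h1; congr (jl k _); lia.
- rewrite -h2; congr (jl k _); lia.
Qed.
Lemma bwd1 p : jl k (- p%:Z) = (jbwd k p).1.1. Proof. by case: (bwd_all p). Qed.
Lemma bwd2 p : jl k (- p%:Z + 1) = (jbwd k p).1.2. Proof. by case: (bwd_all p). Qed.
Lemma bwd3 p : jl k (- p%:Z + 2) = (jbwd k p).2. Proof. by case: (bwd_all p). Qed.

Lemma jrec (m : int) : jl k (m + 3) = (k-1) * jl k (m+2) + (k-1) * jl k (m+1) + k * jl k m.
Proof.
case: m => [n|p].
- rewrite -!PoszD !addnS !addn0 -fwd_rec. done.
- have E : Negz p = - (p.+1)%:Z by rewrite NegzE.
  rewrite E.
  have -> : jl k (- (p.+1)%:Z) = (jbwd k p.+1).1.1 by rewrite bwd1.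
  rewrite /=.
  have h1 := bwd1 p; have h2 := bwd2 p; have h3 := bwd3 p.
  move: h1 h2 h3; case: (jbwd k p) => [[a b] c] /= h1 h2 h3.
  have -> : - (p.+1)%:Z + 3 = - p%:Z + 2 by lia.
  have -> : - (p.+1)%:Z + 2 = - p%:Z + 1 by lia.
  have -> : - (p.+1)%:Z + 1 = - p%:Z by lia.
  rewrite h1 h2 h3. field. exact: lt0r_neq0.
Qed.

Lemma mx3_mulM (a b c d e f g h i : R) :
  mx3 a b c d e f g h i *m Mk k =
  mx3 ((k-1)*a + b) ((k-1)*a + c) (k*a) ((k-1)*d + e) ((k-1)*d + f) (k*d)
      ((k-1)*g + h) ((k-1)*g + i) (k*g).
Proof.
apply/matrixP => r s; rewrite !mxE !big_ord_recr big_ord0 /= !mxE.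
case: r => [[|[|[|r]]] Hr]; case: s => [[|[|[|s]]] Hs] //=; ring.
Qed.

Lemma main_all (n : nat) :
  N0k k *m (Mk k) ^+ n =
  mx3 (jl k (n%:Z + 1)) (tl k (n%:Z - 1)) (k * jl k n%:Z)
      (jl k n%:Z)       (tl k (n%:Z - 2)) (k * jl k (n%:Z - 1))
      (jl k (n%:Z - 1)) (tl k (n%:Z - 3)) (k * jl k (n%:Z - 2)).
Proof.
elim: n => [|n IH].
  rewrite expr0 mulmx1 /N0k /tl.
  rewrite (_ : 0%:Z - 1 + 1 = 0) // (_ : 0%:Z - 2 + 1 = Negz 0) //.
  rewrite (_ : 0%:Z - 3 + 1 = Negz 1) // (_ : 0%:Z - 1 = Negz 0) //.
  rewrite (_ : 0%:Z - 2 = Negz 1) // (_ : 0%:Z - 3 = Negz 2) //.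
  rewrite /jl /=.
  have k0 : k != 0 by exact: lt0r_neq0.
  by congr mx3; field; rewrite ?k0 ?mulf_neq0 ?expf_neq0.

rewrite exprSr -mulmxE mulmxA IH mx3_mulM.
have -> : (n.+1)%:Z = n%:Z + 1 by lia.
move: (n%:Z) => m.
rewrite /tl.
have R2 : jl k (m+2) = (k-1) * jl k (m+1) + (k-1) * jl k m + k * jl k (m-1).
  by rewrite -[m+2](_ : m - 1 + 3 = _) ?jrec; [congr (_ + _ + _); congr (_ * jl k _)|]; lia.
have R1 : jl k (m+1) = (k-1) * jl k m + (k-1) * jl k (m-1) + k * jl k (m-2).
  by rewrite -[m+1](_ : m - 2 + 3 = _) ?jrec; [congr (_ + _ + _); congr (_ * jl k _)|]; lia.
have R0 : jl k m = (k-1) * jl k (m-1) + (k-1) * jl k (m-2) + k * jl k (m-3).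
  by rewrite -[X in jl k X](_ : m - 3 + 3 = _) ?jrec; [congr (_ + _ + _); congr (_ * jl k _)|]; lia.
have -> : m+1-1+1 = m+1 by lia.
have -> : m+1-2+1 = m by lia.
have -> : m+1-3+1 = m-1 by lia.
have -> : m+1+1 = m+2 by lia.
have -> : m+1-1 = m by lia.
have -> : m+1-2 = m-1 by lia.
have -> : m+1-3 = m-2 by lia.
have -> : m-1+1 = m by lia.
have -> : m-2+1 = m-1 by lia.
have -> : m-3+1 = m-2 by lia.
congr mx3; rewrite ?R2 ?R1 ?R0; ring.
Qed.
End S.

Theorem mainTheorem2 (R : realType) (k : R) (hk : 0 < k) (n : nat) (hn : (1 <= n)%N) :
  N0k k *m (Mk k) ^+ n =
  mx3 (jl k (n%:Z + 1)) (tl k (n%:Z - 1)) (k * jl k n%:Z)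
      (jl k n%:Z)       (tl k (n%:Z - 2)) (k * jl k (n%:Z - 1))
      (jl k (n%:Z - 1)) (tl k (n%:Z - 3)) (k * jl k (n%:Z - 2)).
Proof. exact: main_all. Qed.
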